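(* For integers $a,b\ge0$ and $1\le r\le a+b$, $D_{2r+1}\big(\zeta^{\mathfrak f}(\{2\}^a,3,\{2\}^b)\big)=\pi_{2r+1}\big(\alpha(\xi^r_{a,b})\big)\otimes\zeta^{\mathfrak f}(\{2\}^{a+b+1-r})$, where $\xi^r_{a,b}=\sum_{\substack{0\le\alpha'\le a,\ 0\le\beta\le b\\ \alpha'+\beta+1=r}}\zeta^{\mathfrak f}(\{2\}^{\alpha'},3,\{2\}^\beta)-\sum_{\substack{0\le\alpha'<a,\ 0\le\beta\le b\\ \alpha'+\beta+1=r}}\zeta^{\mathfrak f}(\{2\}^\beta,3,\{2\}^{\alpha'})+2\big(\mathbb 1(a\ge r)-\mathbb 1(b\ge r)\big)\sum_{i=1}^r(-1)^i\zeta^{\mathfrak f}(2i+1)\zeta^{\mathfrak f}(\{2\}^{r-i})$, and $\mathbb 1(P)$ is $1$ if $P$ holds and $0$ otherwise.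
   Context: Formal MZVs: $\mathcal X=\{x_0,x_1\}$, $\mathbb Q\langle\mathcal X\rangle$ free noncommutative polynomials (weight = number of letters), $ш$ shuffle product. $\mathcal Z^{\mathfrak f}=(\mathbb Q\langle\mathcal X\rangle,ш)/R$, $R$ the ideal generated by $x_0,x_1$ and $uш v-\iota(\iota^{-1}(u)*\iota^{-1}(v))$ for $u\in\mathbb Q\mathbf1+x_0\mathbb Q\langle\mathcal X\rangle x_1$, $v\in\mathbb Q\mathbf1+\mathbb Q\langle\mathcal X\rangle x_1$, with $\iota(y_{k_1}\cdots y_{k_d})=x_0^{k_1-1}x_1\cdots x_0^{k_d-1}x_1$ and $*$ the stuffle product ($y_iu*y_jv=y_i(u*y_jv)+y_j(y_iu*v)+y_{i+j}(u*v)$). $\zeta^{\mathfrak f}(k_1,\dots,k_d)$ is the class of $x_0^{k_1-1}x_1\cdots x_0^{k_d-1}x_1$; $\{2\}^m$ is $m$ entries $2$, $\zeta^{\mathfrak f}(\{2\}^0)=1$. $\mathcal A^{\mathfrak f}=\mathcal Z^{\mathfrak f}/(\zeta^{\mathfrak f}(2))$, $\alpha$ the projection; Goncharov coaction $\Delta_{\mathrm{Gon}}:\mathcal Z^{\mathfrak f}\to\mathcal A^{\mathfrak f}\otimes\mathcal Z^{\mathfrak f}$, $\zeta^{\mathfrak f}(w)\mapsto(\alpha\circ\zeta^{\mathfrak f}\otimes\zeta^{\mathfrak f})(\Delta_{\mathrm{Gon}}(w))$, where $\Delta_{\mathrm{Gon}}(\varepsilon_1\cdots\varepsilon_n)=\sum_k\sum_{0<i_1<\dots<i_k<n+1}\big(\mathop{ш}_{p=0}^kI(\varepsilon_{i_p};\varepsilon_{i_p+1}\cdots\varepsilon_{i_{p+1}-1};\varepsilon_{i_{p+1}})\big)\otimes\varepsilon_{i_1}\cdots\varepsilon_{i_k}$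 ($i_0=0,i_{k+1}=n+1,\varepsilon_0=x_1,\varepsilon_{n+1}=x_0$; $I(x_1;f;x_0)=f$, $I(x_0;f;x_1)=S(f)$, $S(\varepsilon_1\cdots\varepsilon_m)=(-1)^m\varepsilon_m\cdots\varepsilon_1$, $I(\varepsilon;f;\varepsilon)$ = coefficient of $\mathbf1$ in $f$ times $\mathbf1$). $\mathcal L^{\mathfrak f}=\mathcal A^{\mathfrak f}_{>0}/(\mathcal A^{\mathfrak f}_{>0})^2$, $\pi_{2r+1}:\mathcal A^{\mathfrak f}_{>0}\to\mathcal L^{\mathfrak f}_{2r+1}$ the projection, and $D_{2r+1}=(\pi_{2r+1}\otimes\mathrm{id})\circ(\Delta_{\mathrm{Gon}}-\mathbf1\otimes\mathrm{id}):\mathcal Z^{\mathfrak f}\to\mathcal L^{\mathfrak f}_{2r+1}\otimes\mathcal Z^{\mathfrak f}$. *)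

(* Defs.v *)
From mathcomp Require Import all_boot all_algebra.
Set Implicit Arguments. Unset Strict Implicit. Unset Printing Implicit Defensive.
Import GRing.Theory.
Local Open Scope ring_scope.

(* Letters: x0 = false, x1 = true.  Words = seq bool, weight = size. *)
Definition x0 : bool := false.
Definition x1 : bool := true.
Definition word := seq bool.

(* Elements of Q<X>: finite formal Q-linear combinations of words, given by a
   list of terms; two lists denote the same polynomial iff they have the same
   coefficient function [coef]. *)
Definition poly := seq (rat * word).
Definition coef (p : poly) (w : word) : rat := \sum_(t <- p | t.2 == w) t.1.
Definition pword (w : word) : poly := [:: (1, w)].
Definition pone : poly := pword [::].
Definition pscale (c : rat) (p : poly) : poly := [seq (c * t.1, t.2) | t <- p].
Definition padd (p q : poly) : poly := p ++ q.
Definition psub (p q : poly) : poly := p ++ pscale (-1) q.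
Definition psum (ps : seq poly) : poly := flatten ps.

Fixpoint shw (u v : word) : seq word :=
  match u with
  | [::] => [:: v]
  | a :: u' =>
    let fix aux (v : word) : seq word :=
        match v with
        | [::] => [:: u]
        | b :: v' => map (cons a) (shw u' v) ++ map (cons b) (aux v')
        end in aux v
  end.
Definition pshuffle (p q : poly) : poly :=
  flatten [seq [seq (s.1 * t.1, w) | w <- shw s.2 t.2] | s <- p, t <- q].

(* stuffle product on words in the letters y_k (seq nat) *)
Fixpoint stuffle (u v : seq nat) : seq (seq nat) :=
  match u with
  | [::] => [:: v]
  | i :: u' =>
    let fix aux (v : seq nat) : seq (seq nat) :=
        match v with
        | [::] => [:: u]
        | j :: v' => map (cons i) (stuffle u' v) ++ map (cons j) (aux v')
                     ++ map (cons (i + j)%N) (stuffle u' v')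
        end in aux v
  end.

Definition iotaw (ks : seq nat) : word :=
  flatten [seq rcons (nseq k.-1 x0) x1 | k <- ks].
(* inverse of iota on words in Q1 + Q<X> x1 *)
Fixpoint iotainv_aux (c : nat) (w : word) : seq nat :=
  match w with
  | [::] => [::]
  | b :: w' => if b then c.+1 :: iotainv_aux 0 w' else iotainv_aux c.+1 w'
  end.
Definition iotainv (w : word) : seq nat := iotainv_aux 0 w.

Definition pstuffle_iota (p q : poly) : poly :=
  flatten [seq [seq (s.1 * t.1, iotaw k) | k <- stuffle (iotainv s.2) (iotainv t.2)]
          | s <- p, t <- q].

Definition conv_word (w : word) : bool :=
  (w == [::]) || ((head x1 w == x0) && (last x0 w == x1)).
Definition adm_word (w : word) : bool := (w == [::]) || (last x0 w == x1).
Definition poly_in (P : word -> bool) (p : poly) : Prop :=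
  forall t, t \in p -> P t.2.

Definition lincomb (l : seq (rat * poly)) : poly :=
  psum [seq pscale x.1 x.2 | x <- l].
Definition inspan (S : poly -> Prop) (f : poly) : Prop :=
  exists l : seq (rat * poly), (forall x, x \in l -> S x.2) /\
    forall w, coef f w = coef (lincomb l) w.
Definition shideal (G : poly -> Prop) (f : poly) : Prop :=
  inspan (fun h => exists g u, G g /\ h = pshuffle g (pword u)) f.

Definition R_gens (g : poly) : Prop :=
  g = pword [:: x0] \/ g = pword [:: x1] \/
  exists u v, poly_in conv_word u /\ poly_in adm_word v /\
    g = psub (pshuffle u v) (pstuffle_iota u v).
Definition Rideal : poly -> Prop := shideal R_gens.

(* zeta^f(k1,...,kd) is the class of iotaw [:: k1; ...; kd] *)
Definition zetaw (ks : seq nat) : poly := pword (iotaw ks).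

(* Kernel of Q<X> -> Z^f -> A^f = Z^f/(zeta^f(2)) -> L^f_n, where the last
   arrow is pi_n on A^f_{>0} (extended by 0 on the weight-0 part A^f_0 = Q):
   spanned by the ideal generated by R and zeta(2) = x0 x1, by products of
   two positive-weight polynomials, and by the words of weight different
   from n. *)
Definition pos_word (w : word) : bool := (0 < size w)%N.
Definition A_gens (g : poly) : Prop := R_gens g \/ g = pword [:: x0; x1].
Definition Lker (n : nat) (f : poly) : Prop :=
  inspan (fun h =>
    (exists g u, A_gens g /\ h = pshuffle g (pword u)) \/
    (exists u v, poly_in pos_word u /\ poly_in pos_word v /\ h = pshuffle u v) \/
    (exists w : word, size w <> n /\ h = pword w)) f.

Definition tpoly := seq (rat * (word * word)).
Definition tcoef (t : tpoly) (ww : word * word) : rat :=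
  \sum_(s <- t | s.2 == ww) s.1.
Definition tensor (p q : poly) : tpoly :=
  [seq (s.1 * t.1, (s.2, t.2)) | s <- p, t <- q].
Definition tsub (t u : tpoly) : tpoly :=
  t ++ [seq (- s.1, s.2) | s <- u].
Definition tlincomb (l : seq (rat * tpoly)) : tpoly :=
  flatten [seq [seq (x.1 * s.1, s.2) | s <- x.2] | x <- l].
Definition tinspan (S : tpoly -> Prop) (t : tpoly) : Prop :=
  exists l : seq (rat * tpoly), (forall x, x \in l -> S x.2) /\
    forall ww, tcoef t ww = tcoef (tlincomb l) ww.
(* Kernel of Q<X> (x) Q<X> -> L^f_n (x) Z^f :  Lker n (x) Q<X> + Q<X> (x) R *)
Definition TKer (n : nat) (t : tpoly) : Prop :=
  tinspan (fun h =>
    (exists f u, Lker n f /\ h = tensor f (pword u)) \/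
    (exists u g, Rideal g /\ h = tensor (pword u) g)) t.
(* equality in L^f_n (x) Z^f of the images of two tensors *)
Definition eqLZ (n : nat) (t u : tpoly) : Prop := TKer n (tsub t u).

Definition Iint (a : bool) (f : word) (b : bool) : poly :=
  if a == b then (if f is [::] then pone else [::])
  else if a then pword f
  else [:: ((-1) ^+ size f, rev f)].           (* I(x0; f; x1) = S(f) *)
Fixpoint masks (n : nat) : seq bitseq :=
  match n with
  | 0 => [:: [::]]
  | n'.+1 => [seq b :: m | b <- [:: false; true], m <- masks n']
  end.
Definition gon_left (w : word) (m : bitseq) : poly :=
  let n := size w in
  let e := x1 :: rcons w x0 in
  let pts := 0%N :: rcons [seq i.+1 | i <- iota 0 n & nth false m i] n.+1 in
  foldr (fun pq acc =>
           pshuffle (Iint (nth x0 e pq.1) (drop pq.1.+1 (take pq.2 e)) (nth x0 e pq.2)) acc)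
        pone (zip pts (behead pts)).
Definition DeltaGon (w : word) : tpoly :=
  flatten [seq [seq (t.1, (t.2, mask m w)) | t <- gon_left w m] | m <- masks (size w)].
(* representative of (Delta_Gon - 1 (x) id)(w); D_{2r+1} is its image in
   L^f_{2r+1} (x) Z^f *)
Definition Dpre (w : word) : tpoly := tsub (DeltaGon w) (tensor pone (pword w)).

Definition z2a32b (a b : nat) : poly := zetaw (nseq a 2%N ++ 3%N :: nseq b 2%N).
Definition ind (P : bool) : rat := if P then 1 else 0.
Definition xi (r a b : nat) : poly :=
  padd (padd
    (psum [seq z2a32b al (r.-1 - al) | al <- iota 0 r & (al <= a)%N && (r.-1 - al <= b)%N])
    (pscale (-1)
      (psum [seq z2a32b (r.-1 - al) al | al <- iota 0 r & (al < a)%N && (r.-1 - al <= b)%N])))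
    (pscale (2 * (ind (r <= a)%N - ind (r <= b)%N))
      (psum [seq pscale ((-1) ^+ i) (pshuffle (zetaw [:: (2 * i).+1]) (zetaw (nseq (r - i) 2%N)))
            | i <- iota 1 r])).

(* Main.v *)
Require Import Defs.
From mathcomp Require Import all_boot all_algebra zify ring.
Set Implicit Arguments. Unset Strict Implicit. Unset Printing Implicit Defensive.

Module Base.
Import GRing.Theory.
Local Open Scope ring_scope.

Lemma coef_nil w : coef [::] w = 0.
Proof. by rewrite /coef big_nil. Qed.
Lemma coef_cons t p w : coef (t :: p) w = (if t.2 == w then t.1 else 0) + coef p w.
Proof. by rewrite /coef big_cons; case: (t.2 == w); rewrite ?add0r. Qed.
Lemma coef_cat p q w : coef (p ++ q) w = coef p w + coef q w.
Proof. by rewrite /coef big_cat. Qed.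
Lemma coef_flatten ps w : coef (flatten ps) w = \sum_(p <- ps) coef p w.
Proof. by rewrite /coef big_flatten. Qed.
Lemma coef_map (T : Type) (s : seq T) (f : T -> rat * word) w :
  coef (map f s) w = \sum_(x <- s | (f x).2 == w) (f x).1.
Proof. by rewrite /coef big_map. Qed.
Lemma coef_pscale c p w : coef (pscale c p) w = c * coef p w.
Proof. by rewrite /pscale coef_map /coef mulr_sumr. Qed.
Lemma coef_pword u w : coef (pword u) w = (u == w)%:R.
Proof. by rewrite /pword coef_cons coef_nil addr0 /=; case: (u == w). Qed.
Lemma coef_psum ps w : coef (psum ps) w = \sum_(p <- ps) coef p w.
Proof. exact: coef_flatten. Qed.
Lemma coef_padd p q w : coef (padd p q) w = coef p w + coef q w.
Proof. exact: coef_cat. Qed.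
Lemma coef_psub p q w : coef (psub p q) w = coef p w - coef q w.
Proof. by rewrite /psub coef_cat coef_pscale mulN1r. Qed.
Lemma coef_lincomb l w : coef (lincomb l) w = \sum_(x <- l) x.1 * coef x.2 w.
Proof. by rewrite /lincomb coef_psum big_map; apply: eq_bigr => x _; apply: coef_pscale. Qed.

Section Span.
Variable S : Defs.poly -> Prop.
Lemma inspan_eq f g : (forall w, coef f w = coef g w) -> inspan S g -> inspan S f.
Proof. by move=> e [l [Hl He]]; exists l; split=> // w; rewrite e. Qed.
Lemma inspan_nil : inspan S [::].
Proof. by exists [::]; split => // w; rewrite coef_nil coef_lincomb big_nil. Qed.
Lemma inspan_cat f g : inspan S f -> inspan S g -> inspan S (f ++ g).
Proof.
move=> [l1 [H1 E1]] [l2 [H2 E2]]; exists (l1 ++ l2); split.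
  by move=> x; rewrite mem_cat => /orP[Hx|Hx]; [exact: H1|exact: H2].
by move=> w; rewrite coef_cat !coef_lincomb big_cat /= E1 E2 !coef_lincomb.
Qed.
Lemma inspan_scale c f : inspan S f -> inspan S (pscale c f).
Proof.
move=> [l [H E]]; exists [seq (c * x.1, x.2) | x <- l]; split.
  by move=> x /mapP [y Hy ->]; exact: (H y Hy).
move=> w; rewrite coef_pscale E !coef_lincomb big_map mulr_sumr.
by apply: eq_bigr => x _ /=; rewrite mulrA.
Qed.
Lemma inspan_gen h : S h -> inspan S h.
Proof.
move=> Hh; exists [:: (1, h)]; split; first by move=> x; rewrite inE => /eqP ->.
by move=> w; rewrite coef_lincomb big_cons big_nil mul1r addr0.
Qed.
Lemma inspan_flatten ps : (forall p, p \in ps -> inspan S p) -> inspan S (flatten ps).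
Proof.
elim: ps => [|p ps IH] H /=; first exact: inspan_nil.
apply: inspan_cat; first by apply: H; rewrite inE eqxx.
by apply: IH => q Hq; apply: H; rewrite inE Hq orbT.
Qed.
Lemma inspan_psub f g : inspan S f -> inspan S g -> inspan S (psub f g).
Proof. by move=> Hf Hg; apply: inspan_cat => //; apply: inspan_scale. Qed.
End Span.

Lemma tcoef_nil w : tcoef [::] w = 0.
Proof. by rewrite /tcoef big_nil. Qed.
Lemma tcoef_cons t p w : tcoef (t :: p) w = (if t.2 == w then t.1 else 0) + tcoef p w.
Proof. by rewrite /tcoef big_cons; case: (t.2 == w); rewrite ?add0r. Qed.
Lemma tcoef_cat p q w : tcoef (p ++ q) w = tcoef p w + tcoef q w.
Proof. by rewrite /tcoef big_cat. Qed.
Lemma tcoef_flatten ps w : tcoef (flatten ps) w = \sum_(p <- ps) tcoef p w.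
Proof. by rewrite /tcoef big_flatten. Qed.
Lemma tcoef_map (T : Type) (s : seq T) (f : T -> rat * (word * word)) w :
  tcoef (map f s) w = \sum_(x <- s | (f x).2 == w) (f x).1.
Proof. by rewrite /tcoef big_map. Qed.
Lemma tcoef_tsub p q w : tcoef (tsub p q) w = tcoef p w - tcoef q w.
Proof.
rewrite /tsub tcoef_cat tcoef_map /= /tcoef.
by rewrite (big_morph _ (@opprD _) (@oppr0 _)).
Qed.
Lemma tcoef_tensor p q ww : tcoef (tensor p q) ww = coef p ww.1 * coef q ww.2.
Proof.
case: ww => u v /=; rewrite /coef [X in _ = X * _]big_mkcond big_distrl /tensor /tcoef big_mkcond big_allpairs_dep /=.
apply: eq_bigr => s _; rewrite [X in _ = _ * X]big_mkcond big_distrr /=.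
apply: eq_bigr => t _ /=; rewrite xpair_eqE.
by case: (s.2 == u); case: (t.2 == v); rewrite /= ?mulr0 ?mul0r.
Qed.
Lemma tcoef_tlincomb l w : tcoef (tlincomb l) w = \sum_(x <- l) x.1 * tcoef x.2 w.
Proof.
rewrite /tlincomb tcoef_flatten big_map; apply: eq_bigr => x _.
by rewrite tcoef_map /tcoef mulr_sumr.
Qed.

Section TSpan.
Variable S : tpoly -> Prop.
Lemma tinspan_eq f g : (forall w, tcoef f w = tcoef g w) -> tinspan S g -> tinspan S f.
Proof. by move=> e [l [Hl He]]; exists l; split=> // w; rewrite e. Qed.
Lemma tinspan_nil : tinspan S [::].
Proof. by exists [::]; split => // w; rewrite tcoef_nil tcoef_tlincomb big_nil. Qed.
Lemma tinspan_cat f g : tinspan S f -> tinspan S g -> tinspan S (f ++ g).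
Proof.
move=> [l1 [H1 E1]] [l2 [H2 E2]]; exists (l1 ++ l2); split.
  by move=> x; rewrite mem_cat => /orP[Hx|Hx]; [exact: H1|exact: H2].
by move=> w; rewrite tcoef_cat !tcoef_tlincomb big_cat /= E1 E2 !tcoef_tlincomb.
Qed.

Lemma tinspan_gen h : S h -> tinspan S h.
Proof.
move=> Hh; exists [:: (1, h)]; split; first by move=> x; rewrite inE => /eqP ->.
by move=> w; rewrite tcoef_tlincomb big_cons big_nil mul1r addr0.
Qed.
Lemma tinspan_flatten ps : (forall p, p \in ps -> tinspan S p) -> tinspan S (flatten ps).
Proof.
elim: ps => [|p ps IH] H /=; first exact: tinspan_nil.
apply: tinspan_cat; first by apply: H; rewrite inE eqxx.
by apply: IH => q Hq; apply: H; rewrite inE Hq orbT.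
Qed.
Lemma tinspan_opp f : tinspan S f -> tinspan S [seq (- s.1, s.2) | s <- f].
Proof.
move=> [l [H E]]; exists [seq (- x.1, x.2) | x <- l]; split.
  by move=> x /mapP [y Hy ->]; exact: (H y Hy).
move=> w; rewrite tcoef_tlincomb big_map.
have -> : tcoef [seq (- s.1, s.2) | s <- f] w = - tcoef f w.
  by rewrite tcoef_map /tcoef (big_morph _ (@opprD _) (@oppr0 _)).
by rewrite E tcoef_tlincomb (big_morph _ (@opprD _) (@oppr0 _)); apply: eq_bigr => x _ /=; rewrite mulNr.
Qed.
Lemma tinspan_tsub f g : tinspan S f -> tinspan S g -> tinspan S (tsub f g).
Proof. by move=> Hf Hg; apply: tinspan_cat => //; apply: tinspan_opp. Qed.
End TSpan.

End Base.
Import Base.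

Module Shuf.
Import GRing.Theory.
Local Open Scope ring_scope.

Lemma shw_nil_l v : shw [::] v = [:: v].
Proof. by []. Qed.
Lemma shw_nil_r u : shw u [::] = [:: u].
Proof. by case: u. Qed.
Lemma shw_cons a u b v :
  shw (a :: u) (b :: v) = map (cons a) (shw u (b :: v)) ++ map (cons b) (shw (a :: u) v).
Proof. by []. Qed.

Lemma shw_size u v x : x \in shw u v -> size x = (size u + size v)%N.
Proof.
elim: u v x => [|a u IHu] v x; first by rewrite shw_nil_l inE => /eqP ->.
elim: v x => [|b v IHv] x; first by rewrite shw_nil_r inE => /eqP ->; rewrite addn0.
rewrite shw_cons mem_cat => /orP [] /mapP [y Hy ->] /=.
  by rewrite (IHu _ _ Hy).
by rewrite (IHv _ Hy) /= addnS.
Qed.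

Lemma shw1 a v : shw [:: a] v = [seq take k v ++ a :: drop k v | k <- iota 0 (size v).+1].
Proof.
elim: v => [|b v IH] //; rewrite shw_cons IH /=.
have -> : iota 2 (size v) = map S (iota 1 (size v)) by rewrite -(iotaDl 1).
by do 2 congr (_ :: _); rewrite -!map_comp; apply: eq_map => k.
Qed.

Lemma map_pone_id (q : Defs.poly) : flatten [seq [:: (1 * t.1, t.2)] | t <- q] = q.
Proof. by elim: q => [|[c w] q IH] //=; rewrite mul1r IH. Qed.

Lemma pshuffle_pone_l q : pshuffle pone q = q.
Proof.
rewrite /pshuffle /pone /pword /= cats0.
by elim: q => [|[c w] q IH] //=; rewrite mul1r IH.
Qed.

Lemma pshuffle_pone_r p : pshuffle p pone = p.
Proof.
rewrite /pshuffle /pone /pword.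
elim: p => [|[c w] p IH] //=; rewrite shw_nil_r /= mulr1.
by rewrite IH.
Qed.

Lemma mem_pshuffle p q x : x \in pshuffle p q ->
  exists s t, [/\ s \in p, t \in q, x.2 \in shw s.2 t.2 & x.1 = s.1 * t.1].
Proof.
rewrite /pshuffle => /flattenP [l /allpairsP [[s t] /= [Hs Ht ->]]] /mapP [w Hw ->].
by exists s, t.
Qed.

Lemma pshuffle_size p q k l :
  (forall s, s \in p -> size s.2 = k) -> (forall t, t \in q -> size t.2 = l) ->
  forall x, x \in pshuffle p q -> size x.2 = (k + l)%N.
Proof.
move=> Hp Hq x /mem_pshuffle [s [t [Hs Ht Hx _]]].
by rewrite (shw_size Hx) (Hp _ Hs) (Hq _ Ht).
Qed.

Section GL.
Variable J : nat * nat -> Defs.poly.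
Variable g : nat * nat -> nat.
Hypothesis H1 : forall pq, g pq = 0%N -> J pq = pone.
Hypothesis H2 : forall pq t, t \in J pq -> size t.2 = g pq.
Definition gl (P : seq (nat * nat)) := foldr (fun pq acc => pshuffle (J pq) acc) pone P.

Lemma gl_size P t : t \in gl P -> size t.2 = (\sum_(pq <- P) g pq)%N.
Proof.
elim: P t => [|pq P IH] t /=; first by rewrite /pone /pword inE => /eqP ->; rewrite big_nil.
rewrite big_cons; apply: pshuffle_size => //; exact: H2.
Qed.

Lemma gl_zero Q : filter (fun pq => 0 < g pq)%N Q = [::] -> gl Q = pone.
Proof.
elim: Q => [|pq Q IH] //=; case: ifP => // Hg HQ; rewrite (IH HQ).
by rewrite H1 ?pshuffle_pone_l //; move: Hg; rewrite lt0n => /negbFE /eqP.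
Qed.

Lemma gl_one P pq0 : filter (fun pq => 0 < g pq)%N P = [:: pq0] -> gl P = J pq0.
Proof.
elim: P => [|pq P IH] //=; case: ifP => Hg.
  by case=> <- /gl_zero ->; rewrite pshuffle_pone_r.
move=> /IH ->; rewrite H1 ?pshuffle_pone_l //.
by move: Hg; rewrite lt0n => /negbFE /eqP.
Qed.
End GL.

End Shuf.
Import Shuf.

Module LK.
Import GRing.Theory.
Local Open Scope ring_scope.

Section LK.
Variable n : nat.
Definition LS := (fun h =>
    (exists g u, A_gens g /\ h = pshuffle g (pword u)) \/
    (exists u v, poly_in pos_word u /\ poly_in pos_word v /\ h = pshuffle u v) \/
    (exists w : word, size w <> n /\ h = pword w)).
Lemma LkerE f : Lker n f = inspan LS f. Proof. by []. Qed.

Lemma Lker_weight p : (forall t, t \in p -> size t.2 <> n) -> Lker n p.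
Proof.
move=> H; exists [seq (t.1, pword t.2) | t <- p]; split.
  move=> x /mapP [t Ht ->] /=; right; right; exists t.2; split=> //; exact: H.
move=> w; rewrite coef_lincomb big_map (eq_bigr (fun t => t.1 * (t.2 == w)%:R)); last first.
  by move=> t _; rewrite coef_pword.
rewrite /coef big_mkcond /=; apply: eq_bigr => t _.
by case: (t.2 == w); rewrite ?mulr1 ?mulr0.
Qed.

Lemma Lker_prod u v : poly_in pos_word u -> poly_in pos_word v -> Lker n (pshuffle u v).
Proof. by move=> Hu Hv; apply: inspan_gen; right; left; exists u, v. Qed.

Lemma Lker_A g u : A_gens g -> Lker n (pshuffle g (pword u)).
Proof. by move=> Hg; apply: inspan_gen; left; exists g, u. Qed.

Lemma Lker_R g : R_gens g -> Lker n g.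
Proof.
move=> Hg; apply: (@inspan_eq _ _ (pshuffle g (pword [::]))); last by apply: Lker_A; left.
by move=> w; rewrite pshuffle_pone_r.
Qed.
End LK.

Section GL2.
Variable J : nat * nat -> Defs.poly.
Variable g : nat * nat -> nat.
Hypothesis H1 : forall pq, g pq = 0%N -> J pq = pone.
Hypothesis H2 : forall pq t, t \in J pq -> size t.2 = g pq.

Lemma sum_pos (P : seq (nat * nat)) : has (fun pq => 0 < g pq)%N P -> (0 < \sum_(pq <- P) g pq)%N.
Proof.
elim: P => [|pq P IH] //=; rewrite big_cons => /orP [H|H].
  exact: leq_trans H (leq_addr _ _).
exact: leq_trans (IH H) (leq_addl _ _).
Qed.

Lemma gl_two n P : (1 < size (filter (fun pq => 0 < g pq)%N P))%N -> Lker n (gl J P).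
Proof.
elim: P => [|pq P IH] //=; case: ifP => Hg.
  move=> Hs; apply: Lker_prod.
    by move=> t Ht; rewrite /pos_word (H2 Ht).
  move=> t Ht; rewrite /pos_word (gl_size H2 Ht); apply: sum_pos.
  by rewrite has_filter -size_eq0 -lt0n.
move=> /IH; rewrite H1 ?pshuffle_pone_l //.
by move: Hg; rewrite lt0n => /negbFE /eqP.
Qed.
End GL2.

End LK.
Import LK.

Module Gaps.
Import GRing.Theory.


Fixpoint gaps (p : nat) (m : bitseq) (k : nat) : seq (nat * nat) :=
  match m with
  | [::] => [:: (p, k)]
  | true :: m' => (p, k) :: gaps k m' k.+1
  | false :: m' => gaps p m' k.+1
  end.

Definition idx (m : bitseq) k := [seq (i + k)%N | i <- iota 0 (size m) & nth false m i].

Lemma idx_cons b m k : idx (b :: m) k = if b then k :: idx m k.+1 else idx m k.+1.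
Proof.
rewrite /idx /=.
have -> : iota 1 (size m) = map (addn 1) (iota 0 (size m)) by rewrite -iotaDl.
have E : [seq i <- [seq (1 + i)%N | i <- iota 0 (size m)] | nth false (b :: m) i] =
   [seq (1 + i)%N | i <- [seq i <- iota 0 (size m) | nth false m i]].
  rewrite filter_map; congr map; apply: eq_filter => i /=; by rewrite add1n.
have F : [seq (i + k)%N | i <- [seq (1 + i)%N | i <- [seq i <- iota 0 (size m) | nth false m i]]] =
         [seq (i + k.+1)%N | i <- [seq i <- iota 0 (size m) | nth false m i]].
  by rewrite -map_comp; apply: eq_map => i /=; rewrite addnS add1n addSn.
by move: E; case: b => /= E; rewrite E F.
Qed.

Lemma gaps_zip m p k :
  let s := rcons (idx m k) (k + size m) in zip (p :: s) s = gaps p m k.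
Proof.
elim: m p k => [|b m IH] p k /=; first by rewrite /idx /= addn0.
rewrite idx_cons; case: b => /=.
  by rewrite -(IH k k.+1) addSnnS.
by rewrite -(IH p k.+1) addSnnS.
Qed.

Definition ee (w : word) : word := x1 :: rcons w x0.
Definition JJ (w : word) (pq : nat * nat) : Defs.poly :=
  Iint (nth x0 (ee w) pq.1) (drop pq.1.+1 (take pq.2 (ee w))) (nth x0 (ee w) pq.2).
Definition gg (w : word) (pq : nat * nat) : nat := size (drop pq.1.+1 (take pq.2 (ee w))).

Lemma gon_left_gl w m : size m = size w -> gon_left w m = gl (JJ w) (gaps 0 m 1).
Proof.
move=> Hs; rewrite /gon_left /gl -(gaps_zip m 0 1) /= add1n Hs.
have -> : idx m 1 = [seq i.+1 | i <- iota 0 (size w) & nth false m i].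
  by rewrite /idx Hs; apply: eq_map => i; rewrite addn1.
by [].
Qed.

Lemma JJ_empty w pq : gg w pq = 0%N -> JJ w pq = pone.
Proof.
rewrite /gg /JJ => /eqP; rewrite size_eq0 => /eqP ->.
rewrite /Iint; case: ifP => //; case: ifP => //.
Qed.

Lemma JJ_size w pq t : t \in JJ w pq -> size t.2 = gg w pq.
Proof.
rewrite /JJ /gg /Iint; case: ifP => _.
  by case: (drop _ _) => [|? ?]; rewrite ?inE // => /eqP ->.
case: ifP => _; first by rewrite inE => /eqP ->.
by rewrite inE => /eqP -> /=; rewrite size_rev.
Qed.

End Gaps.
Import Gaps.

Module Mask.

Definition hh (pq : nat * nat) : nat := pq.2 - pq.1.+1.

Lemma gaps_head p m k : exists y rest, gaps p m k = (p, y) :: rest /\ k <= y.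
Proof.
elim: m p k => [|[] m IH] p k /=; first by exists k, [::].
  by exists k, (gaps k m k.+1).
by have [y [rest [-> Hy]]] := IH p k.+1; exists y, rest; split => //; apply: ltnW.
Qed.

Lemma gaps_bounds p m k : p < k ->
  all (fun pq => (p <= pq.1) && (pq.2 <= k + size m)) (gaps p m k).
Proof.
elim: m p k => [|[] m IH] p k Hpk /=; first by rewrite leqnn addn0 leqnn.
  rewrite leqnn /= leq_addr /=.
  apply: sub_all (IH k k.+1 (ltnSn k)) => pq /andP [H1 H2].
  by apply/andP; split; [lia|lia].
apply: sub_all (IH p k.+1 (leqW Hpk)) => pq /andP [H1 H2].
by apply/andP; split; [lia|lia].
Qed.

Lemma nseq_cons_cat j (b : bool) s : nseq j b ++ b :: s = nseq j.+1 b ++ s.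
Proof. by elim: j => //= j ->. Qed.

Lemma gaps_allT k m : filter (fun pq => 0 < hh pq) (gaps k m k.+1) = [::] ->
  m = nseq (size m) true.
Proof.
elim: m k => [|[] m IH] k //=.
  rewrite /hh /= subnn ltnn => /IH {1}->; by [].
have [y [rest [-> Hy]]] := gaps_head k m k.+2.
by rewrite /= /hh /=; case: ifP => //; lia.
Qed.

Lemma gaps_char p m k x y : p < k ->
  filter (fun pq => 0 < hh pq) (gaps p m k) = [:: (x, y)] ->
  nseq (k.-1 - p) false ++ m = nseq (x - p) true ++ nseq (y - x.+1) false ++ nseq (k + size m - y) true.
Proof.
elim: m p k => [|[] m IH] p k Hpk /=.
- rewrite /hh /=; case: ifP => // H [<- <-].
  have -> : k.-1 - p = k - p.+1 by lia.
  by rewrite subnn addn0 subnn cats0.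
- rewrite /hh /=; case: ifP => H.
    case=> <- <- /gaps_allT Hm.
    have -> : k.-1 - p = k - p.+1 by lia.
    by rewrite subnn /= Hm size_nseq addKn.
  move=> Hf; have Hk : k = p.+1 by lia.
  subst k; rewrite subnn /=.
  have Hb := gaps_bounds m (ltnSn p.+1).
  have Hx : (x, y) \in gaps p.+1 m p.+2.
    by have := mem_head (x, y) [::]; rewrite -Hf mem_filter => /andP [].
  move: (allP Hb _ Hx) => /= /andP [Hx1 Hy1].
  have := IH p.+1 p.+2 (ltnSn _) Hf; rewrite subnn /= => E; rewrite [in LHS]E.
  have -> : x - p = (x - p.+1).+1 by lia.
  by rewrite /= addSnnS.
- move=> Hf; have := IH p k.+1 (leqW Hpk) Hf.
  rewrite -addSnnS /= => <-.
  rewrite nseq_cons_cat; have -> : (k.-1 - p).+1 = k - p by lia.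
  by [].
Qed.

Lemma gaps_trueS k j m : filter (fun pq => 0 < hh pq) (gaps k (nseq j true ++ m) k.+1) =
  filter (fun pq => 0 < hh pq) (gaps (k + j) m (k + j).+1).
Proof.
elim: j k => [|j IH] k /=; first by rewrite addn0.
have -> : hh (k, k.+1) = 0 by rewrite /hh /= subnn.
by rewrite /= IH addnS.
Qed.

Lemma gaps_falseS p j k m : gaps p (nseq j false ++ m) k = gaps p m (k + j).
Proof. by elim: j k => [|j IH] k /=; rewrite ?addn0 // IH addnS. Qed.

Definition bm (N n i : nat) : bitseq := nseq i true ++ nseq n false ++ nseq (N - n - i) true.

Lemma size_bm N n i : n + i <= N -> size (bm N n i) = N.
Proof. by rewrite /bm !size_cat !size_nseq; lia. Qed.

Lemma gaps_bm N n i : 0 < n ->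
  filter (fun pq => 0 < hh pq) (gaps 0 (bm N n i) 1) = [:: (i, i + n.+1)].
Proof.
move=> Hn; rewrite /bm gaps_trueS add0n gaps_falseS.
have Hh : 0 < hh (i, i.+1 + n) by rewrite /hh /=; lia.
have Ei : i.+1 + n = i + n.+1 by lia.
case: (N - n - i) => [|t] /=; rewrite Hh Ei //.
have := gaps_trueS (i + n.+1) t [::]; rewrite cats0 /= => ->.
by have -> : hh (i + n.+1 + t, (i + n.+1 + t).+1) = 0 by rewrite /hh /= subnn.
Qed.

Lemma bm_inj N n i j : 0 < n -> bm N n i = bm N n j -> i = j.
Proof.
move=> Hn E; have : index false (bm N n i) = index false (bm N n j) by rewrite E.
have H k : index false (bm N n k) = k.
  rewrite /bm index_cat mem_nseq andbF size_nseq index_cat mem_nseq Hn eqxx /=.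
  by move: Hn; clear; case: n => //= n _; rewrite addn0.
by rewrite !H.
Qed.

Lemma count_false (T : Type) (p : pred T) s : (forall x, p x = false) -> count p s = 0.
Proof. by move=> H; elim: s => //= y s ->; rewrite H. Qed.

Lemma count_masks x N : count_mem x (masks N) = (size x == N).
Proof.
elim: N x => [|N IH] [|c x] //=.
- by rewrite cats0 count_cat !count_map !count_false.
- rewrite cats0 count_cat !count_map eqSS.
  have E (b : bool) : count (preim (cons b) (pred1 (c :: x))) (masks N) = (b == c) * count_mem x (masks N).
    case: (eqVneq b c) => [->|ne] /=.
      by rewrite mul1n; apply: eq_count => m /=; rewrite eqseq_cons eqxx.
    by rewrite mul0n; apply: count_false => m /=; rewrite eqseq_cons (negbTE ne).
  by rewrite !E IH; move: E; case: c => /= _; rewrite ?mul0n ?mul1n ?addn0.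
Qed.

End Mask.
Import Mask.

Module Gon.
Import GRing.Theory.

Definition FF (w : word) (m : bitseq) : tpoly := tensor (gon_left w m) (pword (mask m w)).

Lemma TKer_L n f u : Lker n f -> TKer n (tensor f (pword u)).
Proof. by move=> H; apply: tinspan_gen; left; exists f, u. Qed.

Lemma gg_hh w pq : pq.2 <= size (ee w) -> gg w pq = hh pq.
Proof. by move=> H; rewrite /gg size_drop size_takel. Qed.

Lemma sum_filter_pos (T : Type) (g : T -> nat) s :
  (\sum_(x <- s) g x = \sum_(x <- filter (fun x => 0 < g x) s) g x)%N.
Proof.
rewrite big_filter [RHS]big_mkcond /=; apply: eq_bigr => x _.
by case: ifP => // /negbT; rewrite -eqn0Ngt => /eqP.
Qed.

Lemma FF_cases w n m : 0 < n -> size m = size w ->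
  (exists2 i, i + n <= size w & m = bm (size w) n i) \/ TKer n (FF w m).
Proof.
move=> Hn Hs; set P := gaps 0 m 1.
have HP : all (fun pq => (0 <= pq.1) && (pq.2 <= 1 + size m)) P by apply: gaps_bounds.
have Hgl := gon_left_gl Hs.
have Efil : filter (fun pq => 0 < gg w pq) P = filter (fun pq => 0 < hh pq) P.
  apply: eq_in_filter => pq /(allP HP) /andP [_ H2]; rewrite gg_hh //.
  by rewrite /ee /= size_rcons; lia.
have Hsum : forall t, t \in gon_left w m -> size t.2 = (\sum_(pq <- filter (fun pq => 0 < gg w pq) P) gg w pq)%N.
  by move=> t; rewrite Hgl => /(gl_size (@JJ_size w)) ->; rewrite sum_filter_pos.
have Hweight : (\sum_(pq <- filter (fun pq => 0 < gg w pq) P) gg w pq)%N <> n ->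
    TKer n (FF w m).
  move=> Hne; apply: TKer_L; apply: Lker_weight => t /Hsum ->; exact: Hne.
case Ef : (filter (fun pq => 0 < gg w pq) P) => [|[x y] [|pq2 s]].
- by right; apply: Hweight; rewrite Ef big_nil; lia.
- case: (eqVneq (gg w (x, y)) n) => Hxy; last first.
    by right; apply: Hweight; rewrite Ef big_cons big_nil addn0; apply/eqP.
  left; move: Ef; rewrite Efil => Ef.
  have Hin : (x, y) \in filter (fun pq => 0 < hh pq) P by rewrite Ef mem_head.
  move: (Hin); rewrite mem_filter => /andP [_ /(allP HP) /andP [_ Hy]].
  have Hxy' : hh (x, y) = n.
    by rewrite -(@gg_hh w) // /ee /= size_rcons; simpl in Hy; lia.
  have := gaps_char (ltn0Sn 0) Ef; rewrite /= subn0 add1n => E.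
  exists x.
    have := congr1 size E; rewrite !size_cat !size_nseq Hs; rewrite /hh /= in Hxy'; lia.
  rewrite E /bm; congr (_ ++ _ ++ _); rewrite /hh /= in Hxy'; first by rewrite Hxy'.
  have := congr1 size E; rewrite !size_cat !size_nseq Hs => Hsz.
  congr (nseq _ _); lia.
- right; apply: TKer_L; rewrite Hgl; apply: (@gl_two _ (gg w) (@JJ_empty w) (@JJ_size w)).
  by rewrite -/P Ef.
Qed.

Local Open Scope ring_scope.

Lemma sum_pred1_seq (T : eqType) (r : seq T) (i0 : T) (F : T -> rat) :
  uniq r -> i0 \in r -> \sum_(i <- r | i == i0) F i = F i0.
Proof.
move=> Hu Hi; rewrite (eq_bigr (fun=> F i0)) => [|i /eqP -> //].
by rewrite big_const_seq -/(count_mem i0 r) count_uniq_mem // Hi /= addr0.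
Qed.

Lemma sum_count (T : eqType) (r : seq T) (x : T) (c : rat) :
  \sum_(m <- r | m == x) c = c *+ count_mem x r.
Proof.
by rewrite big_const_seq; elim: (count _ _) => //= k ->; rewrite mulrS.
Qed.

Lemma DeltaGon_coef w ww :
  tcoef (DeltaGon w) ww = \sum_(m <- masks (size w)) tcoef (FF w m) ww.
Proof.
rewrite /DeltaGon tcoef_flatten big_map; apply: eq_bigr => m _.
rewrite tcoef_map tcoef_tensor coef_pword /coef mulr_suml; case: ww => u v /=.
rewrite big_mkcond [RHS]big_mkcond /=; apply: eq_bigr => t _.
by rewrite xpair_eqE; case: (t.2 == u); case: (mask m w == v); rewrite /= ?mulr1 ?mulr0.
Qed.

Section Red.
Variables (w : word) (n : nat).
Hypothesis Hn : (0 < n)%N.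
Hypothesis HnN : (n <= size w)%N.
Let N := size w.
Let I := iota 0 (N - n).+1.
Definition GG (m : bitseq) : tpoly :=
  flatten [seq (if m == bm N n i then FF w (bm N n i) else [::]) | i <- I].

Lemma GG_coef m ww : tcoef (GG m) ww = \sum_(i <- I | m == bm N n i) tcoef (FF w (bm N n i)) ww.
Proof.
rewrite /GG tcoef_flatten big_map [RHS]big_mkcond; apply: eq_bigr => i _.
by case: ifP => //; rewrite tcoef_nil.
Qed.

Lemma TKer_diff m : m \in masks N -> TKer n (tsub (FF w m) (GG m)).
Proof.
move=> Hm; have Hs : size m = N.
  have : (0 < count_mem m (masks N))%N by rewrite -has_count has_pred1.
  by rewrite count_masks; case: eqP.
case Eh : (has (fun i => m == bm N n i) I).
  move/hasP: Eh => [i0 Hi0 /eqP Em].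
  apply: (@tinspan_eq _ _ [::]); last exact: tinspan_nil.
  move=> ww; rewrite tcoef_tsub tcoef_nil GG_coef Em.
  rewrite (eq_bigl (fun i => i == i0)) => [|i]; last first.
    by apply/eqP/eqP => [/bm_inj -> //|->].
  by rewrite sum_pred1_seq ?iota_uniq // subrr.
have Hnot : forall i, (i + n <= N)%N -> m <> bm N n i.
  move=> i Hi Em; move/negbT/hasPn: Eh => /(_ i) H.
  have Hi' : i \in I by rewrite mem_iota; apply/andP; split; lia.
  by move: (H Hi'); rewrite Em eqxx.
case: (FF_cases Hn Hs) => [[i Hi Em]|HT]; first by case: (Hnot i Hi Em).
apply: (tinspan_eq _ HT) => ww; rewrite tcoef_tsub GG_coef big1_seq ?subr0 //.
move=> i /andP [/eqP Em Hi]; exfalso; apply: (Hnot i) => //.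
by move: Hi; rewrite mem_iota => /andP [_]; lia.
Qed.

Lemma Dpre_reduce X :
  TKer n (tsub (flatten [seq FF w (bm N n i) | i <- I]) X) -> eqLZ n (Dpre w) X.
Proof.
move=> HX.
set T := flatten [seq tsub (FF w m) (GG m) | m <- masks N] ++
         (tsub (flatten [seq FF w (bm N n i) | i <- I]) X ++ tsub [::] (tensor pone (pword w))).
have HT : TKer n T.
  apply: tinspan_cat; first by apply: tinspan_flatten => t /mapP [m Hm ->]; exact: TKer_diff.
  apply: tinspan_cat => //; apply: tinspan_tsub; first exact: tinspan_nil.
  apply: TKer_L; apply: Lker_weight => t; rewrite inE => /eqP -> /=; lia.
apply: (tinspan_eq _ HT) => ww.
rewrite [LHS]tcoef_tsub /Dpre [X in X - _]tcoef_tsub /T [RHS]tcoef_cat.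
rewrite [X in _ = _ + X]tcoef_cat !tcoef_tsub tcoef_flatten tcoef_nil big_map.
rewrite tcoef_flatten big_map DeltaGon_coef -/N.
have EB : \sum_(m <- masks N) tcoef (GG m) ww = \sum_(i <- I) tcoef (FF w (bm N n i)) ww.
  under eq_bigr do rewrite GG_coef.
  rewrite (exchange_big_dep xpredT) //=.
  apply: eq_big_seq => i Hi; rewrite sum_count count_masks size_bm ?eqxx ?mulr1n //.
  by move: Hi HnN; rewrite mem_iota /N => /andP [_]; lia.
under eq_bigr do rewrite tcoef_tsub.
rewrite big_split /= sumrN EB.
ring.
Qed.

End Red.

Local Close Scope ring_scope.
Lemma FF_bm w n i : (0 < n)%N -> (i + n <= size w)%N ->
  FF w (bm (size w) n i) = tensor (JJ w (i, i + n.+1)) (pword (take i w ++ drop (i + n) w)).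
Proof.
move=> Hn Hi; rewrite /FF.
have Hs : size (bm (size w) n i) = size w by apply: size_bm; rewrite addnC.
rewrite (gon_left_gl Hs).
have HP := @gaps_bounds 0 (bm (size w) n i) 1 (ltn0Sn 0).
rewrite (@gl_one _ (gg w) (@JJ_empty w) _ (i, i + n.+1)); last first.
  rewrite -(gaps_bm (size w) i Hn); apply: eq_in_filter => pq /(allP HP) /andP [_ H2].
  by rewrite gg_hh // /ee /= size_rcons; rewrite Hs in H2; lia.
congr (tensor _ (pword _)).
have E : w = take i w ++ (take n (drop i w) ++ drop (i + n) w).
  by rewrite addnC -drop_drop !cat_take_drop.
rewrite {2}E /bm mask_cat ?size_nseq ?size_take; last by case: ifP => //; lia.
rewrite mask_cat ?size_nseq ?size_take ?size_drop; last by case: ifP => //; lia.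
rewrite mask_false mask_true ?size_take; last by case: ifP => //; lia.
by rewrite mask_true // size_drop; lia.
Qed.

End Gon.
Import Gon.

Module Pat.
Import GRing.Theory.

Definition pat (c L : nat) : word := mkseq (fun k => if k <= c then odd k else ~~ odd k) L.

Lemma mkseqS (T : Type) (f : nat -> T) L : mkseq f L.+1 = f 0 :: mkseq (fun k => f k.+1) L.
Proof.
rewrite /mkseq /=; have -> : iota 1 L = map (addn 1) (iota 0 L) by rewrite -iotaDl.
by rewrite -map_comp; congr (_ :: _); apply: eq_map => k /=; rewrite add1n.
Qed.

Lemma iotaw_cons k s : iotaw (k :: s) = rcons (nseq k.-1 x0) x1 ++ iotaw s.
Proof. by []. Qed.

Lemma iotaw_cat s t : iotaw (s ++ t) = iotaw s ++ iotaw t.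
Proof. by rewrite /iotaw map_cat flatten_cat. Qed.

Lemma iotaw_nseq2 m : iotaw (nseq m 2) = mkseq odd (2 * m).
Proof.
elim: m => [|m IH] //; rewrite /= iotaw_cons IH.
have -> : 2 * m.+1 = (2 * m).+2 by lia.
rewrite !mkseqS /=.
by congr [:: _, _ & _]; apply: eq_mkseq => k /=; lia.
Qed.

Lemma iotaw_pat al be : iotaw (nseq al 2 ++ 3 :: nseq be 2) = pat (2 * al) (2 * al + 2 * be + 3).
Proof.
elim: al => [|al IH].
  rewrite /= iotaw_cons iotaw_nseq2 /pat.
  have -> : 2 * 0 + 2 * be + 3 = (2 * be).+3 by lia.
  rewrite !mkseqS /=.
  by congr [:: _, _, _ & _]; apply: eq_mkseq => k /=; lia.
rewrite /= iotaw_cons IH /pat.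
have -> : 2 * al.+1 + 2 * be + 3 = (2 * al + 2 * be + 3).+2 by lia.
rewrite !mkseqS /=; congr [:: _, _ & _].
by apply: eq_mkseq => k /=; rewrite !negbK; case: ifP => H1; case: ifP => H2; lia.
Qed.

Lemma nth_pat c L k : k < L -> nth x0 (pat c L) k = if k <= c then odd k else ~~ odd k.
Proof. by move=> H; rewrite /pat nth_mkseq. Qed.

Lemma size_pat c L : size (pat c L) = L.
Proof. by rewrite size_mkseq. Qed.

Lemma eq_words (u v : word) : size u = size v -> (forall k, k < size u -> nth x0 u k = nth x0 v k) -> u = v.
Proof. by move=> Hs H; apply: (eq_from_nth Hs) => k Hk; apply: H. Qed.

Section Spec.
Variables a b r : nat.
Hypothesis Hr : 0 < r.
Hypothesis Hrab : r <= a + b.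
Local Notation N := (2 * a + 2 * b + 3).
Local Notation n := ((2 * r).+1).
Local Notation w := (pat (2 * a) N).

Lemma nth_ee k : k < N.+2 -> nth x0 (ee w) k = if k <= (2 * a).+1 then ~~ odd k else odd k.
Proof.
rewrite /ee; case: k => [|k] Hk //=.
rewrite nth_rcons size_pat; case: ifP => H1.
  by rewrite nth_pat //; case: ifP; case: ifP; lia.
by rewrite /x0; case: ifP => _; case: ifP; lia.
Qed.

Definition blk i := drop i.+1 (take (i + n.+1) (ee w)).

Lemma size_blk i : i + n <= N -> size (blk i) = n.
Proof. by move=> H; rewrite /blk size_drop size_takel /ee /= ?size_rcons ?size_pat; lia. Qed.

Lemma nth_blk i k : i + n <= N -> k < n -> nth x0 (blk i) k = nth x0 (ee w) (i.+1 + k).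
Proof. by move=> H Hk; rewrite /blk nth_drop nth_take //; lia. Qed.

Definition cross i := (i <= (2 * a).+1) && (2 * a <= i + 2 * r).

Lemma JJ_val i : i + n <= N ->
  JJ w (i, i + n.+1) = if cross i then
     (if odd i then [:: ((-1)%R, pat (i + 2 * r - 2 * a - 1) n)] else pword (pat (2 * a - i) n))
     else [::].
Proof.
move=> Hi; rewrite /JJ /= -/(blk i) !nth_ee; try lia.
have Hsz := size_blk Hi.
set ei := (if i <= _ then _ else _).
set ej := (if i + _ <= _ then _ else _).
case Hc : (cross i); last first.
  have -> : ej = ei by rewrite /ei /ej; move: Hc; rewrite /cross; case: ifP; case: ifP; lia.
  by rewrite /Iint eqxx; case: (blk i) Hsz.
case: ifP => Ho.
  have -> : ei = false by rewrite /ei; move: Hc; rewrite /cross; case: ifP; lia.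
  have -> : ej = true by rewrite /ej; move: Hc; rewrite /cross; case: ifP; lia.
  rewrite /Iint /= Hsz.
  have -> : ((-1 : rat) ^+ n)%R = (-1)%R.
    by rewrite -signr_odd; have -> : odd n by lia.
  congr [:: (_, _)]; apply: eq_words; first by rewrite size_rev size_pat.
  move=> k; rewrite size_rev Hsz => Hk; rewrite nth_rev Hsz // nth_blk //; try lia.
  rewrite nth_ee; last by lia.
  rewrite nth_pat //; case: ifP; case: ifP; move: Hc; rewrite /cross; lia.
have -> : ei = true by rewrite /ei; move: Hc; rewrite /cross; case: ifP; lia.
have -> : ej = false by rewrite /ej; move: Hc; rewrite /cross; case: ifP; lia.
rewrite /Iint /=; congr pword; apply: eq_words; first by rewrite size_pat.
move=> k; rewrite Hsz => Hk; rewrite nth_blk // nth_ee; last by lia.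
rewrite nth_pat //; case: ifP; case: ifP; move: Hc; rewrite /cross; lia.
Qed.

Lemma rest_word i : i + n <= N -> cross i ->
  take i w ++ drop (i + n) w = iotaw (nseq (a + b + 1 - r) 2).
Proof.
move=> Hi Hc; rewrite iotaw_nseq2; apply: eq_words.
  by rewrite size_cat size_take size_drop size_mkseq size_pat; case: ifP; lia.
move=> k; rewrite size_cat size_take size_drop size_pat => Hk.
rewrite nth_cat size_take size_pat; case: ifP => H1.
  rewrite nth_take; last by move: H1; case: ifP; lia.
  rewrite nth_pat ?nth_mkseq; try (move: H1 Hk Hc; rewrite /cross; case: ifP; lia).
  by move: H1 Hc; rewrite /cross; case: ifP; case: ifP; lia.
rewrite nth_drop nth_pat ?nth_mkseq; try (move: H1 Hk Hc; rewrite /cross; case: ifP; lia).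
by move: H1 Hc; rewrite /cross; case: ifP; case: ifP; lia.
Qed.

Lemma FF_spec i : i + n <= N ->
  FF w (bm N n i) = tensor (JJ w (i, i + n.+1)) (zetaw (nseq (a + b + 1 - r) 2)).
Proof.
move=> Hi; have := @FF_bm w n i (ltn0Sn _); rewrite size_pat => ->; last by [].
rewrite /zetaw; case Hc : (cross i); first by rewrite rest_word.
by rewrite JJ_val // Hc.
Qed.
End Spec.

End Pat.
Import Pat.

Module Sums.
Import GRing.Theory.

Section Sums.
Variables a b r : nat.
Hypothesis Hr : 0 < r.
Hypothesis Hrab : r <= a + b.
Local Notation N := (2 * a + 2 * b + 3).
Local Notation n := ((2 * r).+1).
Local Notation w := (pat (2 * a) N).
Local Notation I := (iota 0 (N - n).+1).

Definition Pe i := cross a r i && ~~ odd i.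
Definition Po i := cross a r i && odd i.
Definition c1 al := (al <= a) && (r.-1 - al <= b).
Definition c2 al := (al < a) && (r.-1 - al <= b).

Lemma PE_perm : perm_eq [seq 2 * a - i | i <- I & Pe i]
   ([seq 2 * al | al <- iota 0 r & c1 al] ++ (if r <= a then [:: 2 * r] else [::])).
Proof.
apply: uniq_perm.
- rewrite map_inj_in_uniq ?filter_uniq ?iota_uniq //.
  move=> i j; rewrite !mem_filter !mem_iota /Pe /cross; lia.
- rewrite cat_uniq map_inj_in_uniq ?filter_uniq ?iota_uniq //=; last first.
    by move=> i j _ _; lia.
  case: ifP => _ //=; rewrite andbT orbF; apply/mapP => [[al]].
  rewrite mem_filter mem_iota; lia.
move=> x; rewrite mem_cat; apply/idP/idP.
  move=> /mapP [i]; rewrite mem_filter mem_iota /Pe /cross => Hi ->.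
  case: (ltnP (2 * a - i) (2 * r)) => H.
    apply/orP; left; apply/mapP; exists ((2 * a - i)./2); last by move: Hi; lia.
    by rewrite mem_filter mem_iota /c1; move: Hi; lia.
  apply/orP; right; case: ifP; rewrite ?inE; move: Hi; lia.
move=> /orP [/mapP [al] | ].
  rewrite mem_filter mem_iota /c1 => Hal ->; apply/mapP; exists (2 * a - 2 * al).
    by rewrite mem_filter mem_iota /Pe /cross; move: Hal; lia.
  by move: Hal; lia.
case: ifP => Ha; rewrite ?inE // => /eqP ->; apply/mapP; exists (2 * a - 2 * r).
  by rewrite mem_filter mem_iota /Pe /cross; lia.
lia.
Qed.

Lemma PO_perm : perm_eq [seq i + 2 * r - 2 * a - 1 | i <- I & Po i]
   ([seq 2 * (r.-1 - al) | al <- iota 0 r & c2 al] ++ (if r <= b then [:: 2 * r] else [::])).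
Proof.
apply: uniq_perm.
- rewrite map_inj_in_uniq ?filter_uniq ?iota_uniq //.
  move=> i j; rewrite !mem_filter !mem_iota /Po /cross; lia.
- rewrite cat_uniq map_inj_in_uniq ?filter_uniq ?iota_uniq //=; last first.
    by move=> i j; rewrite !mem_filter !mem_iota; lia.
  case: ifP => _ //=; rewrite andbT orbF; apply/mapP => [[al]].
  rewrite mem_filter mem_iota; lia.
move=> x; rewrite mem_cat; apply/idP/idP.
  move=> /mapP [i]; rewrite mem_filter mem_iota /Po /cross => Hi ->.
  case: (ltnP (i + 2 * r - 2 * a - 1) (2 * r)) => H.
    apply/orP; left; apply/mapP; exists (r.-1 - (i + 2 * r - 2 * a - 1)./2); last by move: Hi; lia.
    by rewrite mem_filter mem_iota /c2; move: Hi; lia.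
  apply/orP; right; case: ifP; rewrite ?inE; move: Hi; lia.
move=> /orP [/mapP [al] | ].
  rewrite mem_filter mem_iota /c2 => Hal ->; apply/mapP; exists (2 * a - 2 * al - 1).
    by rewrite mem_filter mem_iota /Po /cross; move: Hal; lia.
  by move: Hal; lia.
case: ifP => Hb; rewrite ?inE // => /eqP ->; apply/mapP; exists (2 * a + 1).
  by rewrite mem_filter mem_iota /Po /cross; lia.
lia.
Qed.

Local Open Scope ring_scope.
Definition GG0 (w0 : word) (x : nat) : rat := (pat x n == w0)%:R.

Lemma coef_JJs w0 : coef (psum [seq JJ w (i, i + n.+1)%N | i <- I]) w0 =
  \sum_(x <- [seq (2 * a - i)%N | i <- I & Pe i]) GG0 w0 x
  - \sum_(x <- [seq (i + 2 * r - 2 * a - 1)%N | i <- I & Po i]) GG0 w0 x.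
Proof.
rewrite coef_psum big_map !big_map !big_filter [X in _ = X - _]big_mkcond [X in _ = _ - X]big_mkcond -sumrB.
apply: eq_big_seq => i; rewrite mem_iota => Hi.
rewrite JJ_val //; last by lia.
rewrite /Pe /Po; case: (cross a r i) => /=; last by rewrite coef_nil subr0.
case: (odd i) => /=; last by rewrite coef_pword subr0.
by rewrite Base.coef_cons coef_nil addr0 sub0r /GG0; case: eqP => //; rewrite oppr0.
Qed.

Lemma coef_X1 w0 : coef (psum [seq z2a32b al (r.-1 - al) | al <- iota 0 r & c1 al]) w0 =
  \sum_(x <- [seq (2 * al)%N | al <- iota 0 r & c1 al]) GG0 w0 x.
Proof.
rewrite coef_psum !big_map; apply: eq_big_seq => al; rewrite mem_filter mem_iota => /andP [_ Hal].
rewrite /z2a32b /zetaw iotaw_pat coef_pword /GG0.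
by have -> : (2 * al + 2 * (r.-1 - al) + 3 = n)%N by lia.
Qed.

Lemma coef_X2 w0 : coef (psum [seq z2a32b (r.-1 - al) al | al <- iota 0 r & c2 al]) w0 =
  \sum_(x <- [seq (2 * (r.-1 - al))%N | al <- iota 0 r & c2 al]) GG0 w0 x.
Proof.
rewrite coef_psum !big_map; apply: eq_big_seq => al; rewrite mem_filter mem_iota => /andP [_ Hal].
rewrite /z2a32b /zetaw iotaw_pat coef_pword /GG0.
by have -> : (2 * (r.-1 - al) + 2 * al + 3 = n)%N by lia.
Qed.

Lemma coef_JJs2 w0 : coef (psum [seq JJ w (i, i + n.+1)%N | i <- I]) w0 =
  coef (psum [seq z2a32b al (r.-1 - al) | al <- iota 0 r & c1 al]) w0
  - coef (psum [seq z2a32b (r.-1 - al) al | al <- iota 0 r & c2 al]) w0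
  + (ind (r <= a)%N - ind (r <= b)%N) * GG0 w0 (2 * r).
Proof.
rewrite coef_JJs coef_X1 coef_X2 (perm_big _ PE_perm) (perm_big _ PO_perm) !big_cat /=.
rewrite /ind; case: ifP => _; case: ifP => _; rewrite ?big_cons ?big_nil /=; ring.
Qed.
End Sums.

End Sums.
Import Sums.

Module Key.
Import GRing.Theory.

Section LF.
Variable n : nat.
Definition LkerF (phi : word -> rat) := exists p, Lker n p /\ forall w, coef p w = phi w.

Lemma LkerF_ext phi psi : (forall w, phi w = psi w) -> LkerF psi -> LkerF phi.
Proof. by move=> E [p [Hp Ep]]; exists p; split => // w; rewrite Ep E. Qed.
Lemma LkerF_add phi psi : LkerF phi -> LkerF psi -> LkerF (fun w => phi w + psi w)%R.
Proof.
move=> [p [Hp Ep]] [q [Hq Eq]]; exists (p ++ q); split; first exact: inspan_cat.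
by move=> w; rewrite coef_cat Ep Eq.
Qed.
Lemma LkerF_scale c phi : LkerF phi -> LkerF (fun w => c * phi w)%R.
Proof.
move=> [p [Hp Ep]]; exists (pscale c p); split; first exact: inspan_scale.
by move=> w; rewrite coef_pscale Ep.
Qed.
Lemma LkerF_poly p : Lker n p -> LkerF (coef p).
Proof. by move=> H; exists p. Qed.
Lemma Lker_LkerF p : LkerF (coef p) -> Lker n p.
Proof. by move=> [q [Hq Eq]]; apply: (inspan_eq _ Hq) => w; rewrite Eq. Qed.
Lemma LkerF_zero : LkerF (fun _ => 0%R).
Proof. by exists [::]; split; [exact: inspan_nil | move=> w; rewrite coef_nil]. Qed.
End LF.

Definition tc (c m : nat) (w0 : word) : rat :=
  (\sum_(0 <= k < m.+1) (iotaw (nseq k 2 ++ c :: nseq (m - k) 2) == w0)%:R)%R.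

Local Open Scope ring_scope.

Lemma pshuffle_words u v : pshuffle (pword u) (pword v) = [seq (1 * 1, x) | x <- shw u v].
Proof. by rewrite /pshuffle /pword /= cats0. Qed.

Lemma coef_map1 (s : seq word) w0 : coef [seq (1 * 1, x) | x <- s] w0 = \sum_(x <- s) (x == w0)%:R.
Proof.
rewrite Base.coef_map /= big_mkcond; apply: eq_bigr => x _.
by rewrite mulr1; case: (x == w0).
Qed.

Section K1.
Variable r : nat.
Hypothesis Hr : (0 < r)%N.
Local Notation n := ((2 * r).+1).

Lemma insert_pat k : (k <= 2 * r)%N ->
  take k (mkseq odd (2 * r)) ++ x0 :: drop k (mkseq odd (2 * r)) = pat (2 * k./2) n.
Proof.
move=> Hk; have Hk' : (if (k < 2 * r)%N then k else (2 * r)%N) = k by case: ifP; lia.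
apply: eq_words.
  by rewrite size_cat size_pat /= size_take size_drop size_mkseq Hk'; lia.
move=> j; rewrite size_cat /= size_take size_drop size_mkseq Hk' => Hj.
rewrite nth_pat; last by lia.
rewrite nth_cat size_take size_mkseq Hk'; case: ifP => H1.
  rewrite nth_take // nth_mkseq; last by lia.
  by case: ifP; lia.
rewrite -cat1s nth_cat /=; case: ifP => H2.
  have -> : (j - k = 0)%N by lia.
  by rewrite /x0 /=; case: ifP; lia.
rewrite nth_drop nth_mkseq; last by lia.
by case: ifP; lia.
Qed.

Lemma parity_sum (h : nat -> rat) m :
  \sum_(0 <= k < (2 * m).+1) h k./2 = 2 * \sum_(0 <= q < m) h q + h m.
Proof.
elim: m => [|m IH]; first by rewrite big_nat1 big_geq // mulr0 add0r.
have -> : (2 * m.+1).+1 = ((2 * m).+1).+2 by lia.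
rewrite big_nat_recr //= big_nat_recr //= IH big_nat_recr //=.
have -> : uphalf (2 * m) = m by lia.
have -> : (2 * m)./2 = m by lia.
ring.
Qed.

Lemma K1 : LkerF n (fun w0 => 2 * tc 3 r.-1 w0 + GG0 r w0 (2 * r)).
Proof.
have H : Lker n (pshuffle (pword [:: x0]) (pword (iotaw (nseq r 2)))).
  by apply: Lker_A; left; left.
apply: (LkerF_ext _ (LkerF_poly H)) => w0.
rewrite pshuffle_words coef_map1 shw1 big_map iotaw_nseq2 size_mkseq.
rewrite (eq_big_seq (fun k => GG0 r w0 (2 * k./2))); last first.
  by move=> k; rewrite mem_iota => /andP [_ Hk]; rewrite insert_pat //; lia.
have := parity_sum (fun q => GG0 r w0 (2 * q)) r; rewrite /index_iota subn0 => ->.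
congr (2 * _ + _); rewrite /tc prednK //; apply: eq_big_nat => k /andP [_ Hk].
rewrite iotaw_pat /GG0.
by have -> : (2 * k + 2 * (r.-1 - k) + 3 = n)%N by lia.
Qed.
End K1.

Lemma iotainv_aux_nseq c j rest :
  iotainv_aux c (nseq j false ++ true :: rest) = (c + j).+1 :: iotainv_aux 0 rest.
Proof. by elim: j c => [|j IH] c /=; rewrite ?addn0 // IH addnS. Qed.

Lemma iotainv_iotaw ks : all (fun k => 0 < k)%N ks -> iotainv (iotaw ks) = ks.
Proof.
rewrite /iotainv; elim: ks => [|k ks IH] //= /andP [Hk Hks].
by rewrite iotaw_cons cat_rcons iotainv_aux_nseq add0n prednK // IH.
Qed.

Lemma stuffle1 c d v :
  stuffle [:: c] (d :: v) = (c :: d :: v) :: (map (cons d) (stuffle [:: c] v) ++ [:: (c + d)%N :: v]).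
Proof. by []. Qed.

Lemma stuffle_sum c m (F : seq nat -> rat) :
  \sum_(k <- stuffle [:: c] (nseq m 2)) F k =
  \sum_(0 <= j < m.+1) F (nseq j 2 ++ c :: nseq (m - j) 2) +
  \sum_(0 <= j < m) F (nseq j 2 ++ (c + 2)%N :: nseq (m.-1 - j) 2).
Proof.
elim: m F => [|m IH] F.
  by rewrite /= big_cons big_nil big_nat1 big_geq //.
rewrite [in LHS](_ : nseq m.+1 2%N = 2%N :: nseq m 2%N) // stuffle1 big_cons big_cat big_map IH big_cons big_nil.
rewrite (big_nat_recl (m.+1)) // (big_nat_recl m) //= [X in _ = _ + X](big_nat_recl m) //=.
have -> : \sum_(0 <= j < m) F (2%N :: nseq j 2 ++ (c + 2)%N :: nseq (m - j.+1) 2) =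
          \sum_(0 <= j < m) F (2%N :: nseq j 2 ++ (c + 2)%N :: nseq (m.-1 - j) 2).
  by apply: eq_big_nat => j Hj; have -> : (m - j.+1 = m.-1 - j)%N by lia.
rewrite subn0; ring.
Qed.

Lemma last_iotaw ks : last x1 (iotaw ks) = x1.
Proof. by elim: ks => [|k ks IH] //=; rewrite iotaw_cons last_cat last_rcons. Qed.

Lemma K2 n c m : (2 <= c)%N -> (0 < m)%N ->
  LkerF n (fun w0 => tc c m w0 + tc (c + 2) m.-1 w0).
Proof.
move=> Hc Hm; set u := zetaw [:: c]; set v := zetaw (nseq m 2).
have Hg : R_gens (psub (pshuffle u v) (pstuffle_iota u v)).
  right; right; exists u, v; split; last split => //.
    move=> t; rewrite inE => /eqP -> /=; rewrite /conv_word.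
    rewrite (_ : c = (c - 2).+2); last by lia.
    by rewrite iotaw_cons /= cats0 last_rcons.
  move=> t; rewrite inE => /eqP -> /=; rewrite /adm_word.
  rewrite (_ : m = m.-1.+1); last by lia.
  rewrite (_ : nseq m.-1.+1 2%N = 2%N :: nseq m.-1 2%N) //.
  by rewrite iotaw_cons last_cat last_rcons last_iotaw orbT.
have Hp : Lker n (pshuffle u v).
  apply: Lker_prod.
    by move=> t; rewrite inE => /eqP -> /=; rewrite /pos_word /iotaw /= cats0 size_rcons.
  move=> t; rewrite inE => /eqP -> /=; rewrite /pos_word iotaw_nseq2 size_mkseq; lia.
have Hs : Lker n (psub (pshuffle u v) (psub (pshuffle u v) (pstuffle_iota u v))).
  by apply: inspan_psub => //; apply: Lker_R.
apply: (LkerF_ext _ (LkerF_poly Hs)) => w0.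
rewrite !coef_psub opprB [RHS]addrC subrK.
rewrite /pstuffle_iota /u /v /zetaw /pword /= cats0 Base.coef_map /=.
rewrite iotainv_iotaw /=; last by rewrite andbT; lia.
rewrite iotainv_iotaw; last by rewrite all_nseq orbT.
rewrite big_mkcond /= (eq_bigr (fun k => (iotaw k == w0)%:R)); last first.
  by move=> k _; rewrite mulr1; case: eqP.
rewrite stuffle_sum /tc prednK //.
Qed.

Section K3.
Variable r : nat.
Hypothesis Hr : (0 < r)%N.
Local Notation n := ((2 * r).+1).

Lemma K3t t : (t <= r.-1)%N ->
  LkerF n (fun w0 => tc 3 r.-1 w0 - (-1) ^+ t * tc (2 * t + 3) (r.-1 - t) w0).
Proof.
elim: t => [|t IH] Ht.
  by apply: (LkerF_ext _ (LkerF_zero n)) => w0; rewrite expr0 mul1r subn0 subrr.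
have H2 := @K2 n (2 * t + 3) (r.-1 - t) (leq_trans (isT : (2 <= 3)%N) (leq_addl _ _)) (ltac:(lia)).
have := LkerF_add (IH (ltnW Ht)) (LkerF_scale ((-1) ^+ t) H2).
apply: LkerF_ext => w0.
have -> : (2 * t.+1 + 3 = 2 * t + 3 + 2)%N by lia.
have -> : (r.-1 - t.+1 = (r.-1 - t).-1)%N by lia.
rewrite exprS; ring.
Qed.

Lemma K3 : LkerF n (fun w0 => tc 3 r.-1 w0 - (-1) ^+ r.-1 * tc n 0 w0).
Proof.
have := K3t (leqnn r.-1); apply: LkerF_ext => w0.
by rewrite subnn; have -> : (2 * r.-1 + 3 = n)%N by lia.
Qed.

Definition T3 := psum [seq pscale ((-1) ^+ i) (pshuffle (zetaw [:: (2 * i).+1]) (zetaw (nseq (r - i) 2))) | i <- iota 1 r].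

Lemma K4 : LkerF n (fun w0 => coef T3 w0 - (-1) ^+ r * tc n 0 w0).
Proof.
have E : iota 1 r = iota 1 r.-1 ++ [:: r].
  have -> : iota 1 r = iota 1 (r.-1 + 1) by rewrite addn1 prednK.
  by rewrite iotaD add1n prednK.
set P1 := psum [seq pscale ((-1) ^+ i) (pshuffle (zetaw [:: (2 * i).+1]) (zetaw (nseq (r - i) 2))) | i <- iota 1 r.-1].
have H1 : Lker n P1.
  apply: inspan_flatten => p /mapP [i]; rewrite mem_iota => Hi ->.
  apply: inspan_scale; apply: Lker_prod.
    by move=> t; rewrite inE => /eqP -> /=; rewrite /pos_word /iotaw /= cats0 size_rcons.
  move=> t; rewrite inE => /eqP -> /=; rewrite /pos_word iotaw_nseq2 size_mkseq; lia.
apply: (LkerF_ext _ (LkerF_poly H1)) => w0.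
rewrite /T3 E map_cat /psum flatten_cat coef_cat -/(psum _) -/P1 /= cats0.
rewrite coef_pscale subnn /zetaw /= pshuffle_pone_r coef_pword.
by rewrite /tc big_nat1 /= addrK.
Qed.
End K3.

Lemma Kfinal r : (0 < r)%N -> LkerF ((2 * r).+1) (fun w0 => GG0 r w0 (2 * r) - 2 * coef (T3 r) w0).
Proof.
move=> Hr.
have := LkerF_add (LkerF_add (K1 Hr) (LkerF_scale (-2) (K3 Hr))) (LkerF_scale (-2) (K4 Hr)).
apply: LkerF_ext => w0.
have -> : (-1) ^+ r = - (-1) ^+ r.-1 :> rat by rewrite -{1}(prednK Hr) exprS mulN1r.
ring.
Qed.

End Key.
Import Key.

Module MainAux.
Import GRing.Theory.

Lemma coef_xi r a b w0 : coef (xi r a b) w0 =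
  (coef (psum [seq z2a32b al (r.-1 - al) | al <- iota 0 r & c1 a b r al]) w0
  - coef (psum [seq z2a32b (r.-1 - al) al | al <- iota 0 r & c2 a b r al]) w0
  + 2 * (ind (r <= a)%N - ind (r <= b)%N) * coef (T3 r) w0)%R.
Proof. by rewrite /xi !coef_padd !coef_pscale mulN1r. Qed.

Lemma Lker_core a b r : 0 < r -> r <= a + b ->
  Lker (2 * r).+1 (psub (psum [seq JJ (pat (2 * a) (2 * a + 2 * b + 3)) (i, i + (2 * r).+2)
                             | i <- iota 0 ((2 * a + 2 * b + 3) - (2 * r).+1).+1]) (xi r a b)).
Proof.
move=> Hr Hrab; apply: Lker_LkerF.
have := LkerF_scale (ind (r <= a)%N - ind (r <= b)%N)%R (Kfinal Hr).
apply: LkerF_ext => w0.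
rewrite coef_psub coef_JJs2 // coef_xi.
ring.
Qed.


End MainAux.
Import MainAux.



Theorem mainTheorem18 (a b r : nat) :
  (1 <= r)%N -> (r <= a + b)%N ->
  eqLZ (2 * r).+1 (Dpre (iotaw (nseq a 2%N ++ 3%N :: nseq b 2%N)))
       (tensor (xi r a b) (zetaw (nseq (a + b + 1 - r) 2%N))).
Proof.
move=> Hr Hrab; rewrite iotaw_pat.
apply: Dpre_reduce; rewrite ?size_pat //; try lia.
set Z := nseq (a + b + 1 - r) 2.
have E : [seq FF (pat (2 * a) (2 * a + 2 * b + 3)) (bm (2 * a + 2 * b + 3) (2 * r).+1 i)
             | i <- iota 0 (2 * a + 2 * b + 3 - (2 * r).+1).+1] =
         [seq tensor (JJ (pat (2 * a) (2 * a + 2 * b + 3)) (i, i + (2 * r).+2)) (zetaw Z)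
             | i <- iota 0 (2 * a + 2 * b + 3 - (2 * r).+1).+1].
  by apply/eq_in_map => i; rewrite mem_iota => Hi; apply: FF_spec; lia.
rewrite E.
apply: (tinspan_eq _ (TKer_L (iotaw Z) (Lker_core Hr Hrab))) => ww.
rewrite tcoef_tsub tcoef_flatten big_map !tcoef_tensor coef_psub coef_psum big_map.
under eq_bigr do rewrite tcoef_tensor.
by rewrite GRing.mulrBl -GRing.mulr_suml.
Qed.
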